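(* Let $d\ge2$, let $p_1,\dots,p_{d+1}$ be the vertices of a regular $d$-simplex inscribed in the unit sphere centered at the origin, and for each $i$ let $q_i$ be the point on the ray from the origin through the circumcenter of the facet opposite $p_i$ at distance $\rho>20d$ from the origin. Let $\mathcal Q=\{p_1,\dots,p_{d+1},q_1,\dots,q_{d+1}\}$, $\mathcal D(\mathcal Q)$ its Delaunay complex and $\mathring{\mathcal D}(\mathcal Q)=\mathcal D(\mathcal Q\cup\{\mathbf 0\})$. Then: (1) $\mathring{\mathcal D}(\mathcal Q)\setminus\mathcal D(\mathcal Q)$ consists of at most $2^{d+1}$ simplices, whose maximum weight is $d/2$ and minimum weight is $1/2$; (2) $\mathcal D(\mathcal Q)\setminus\mathring{\mathcal D}(\mathcal Q)$ consists of a single $d$-simplex, of weight $1$.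
   Context: For a finite set $\mathcal X\subset\mathbb{R}^d$, $\mathrm{Vor}_{\mathcal X}(x)=\{y:|y-x|\le|y-x'|\ \forall x'\in\mathcal X\}$; the Delaunay complex $\mathcal D(\mathcal X)$ consists of all $[x_0,\dots,x_k]$ with $\bigcap_i\mathrm{Vor}_{\mathcal X}(x_i)\ne\emptyset$, with weight $w([x_0,\dots,x_k])=\inf\{s:\bigcap_i(B_s(x_i)\cap\mathrm{Vor}_{\mathcal X}(x_i))\ne\emptyset\}$, computed in the complex containing the simplex. *)

(* Defs.v *)
From HB Require Import structures.
From mathcomp Require Import all_boot all_order all_algebra.
From mathcomp Require Import finmap.
From mathcomp Require Import boolp classical_sets reals.
Set Implicit Arguments. Unset Strict Implicit. Unset Printing Implicit Defensive.
Import Order.TTheory GRing.Theory Num.Theory.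
Local Open Scope ring_scope.
Local Open Scope fset_scope.

Section Delaunay.
Variables (R : realType) (d : nat).
Notation pt := 'rV[R]_d.

Definition edist (x y : pt) : R := Num.sqrt (\sum_(i < d) (x 0 i - y 0 i) ^+ 2).

Definition Vor (X : {fset pt}) (x : pt) : set pt :=
  [set y | forall x', x' \in X -> edist y x <= edist y x'].

Definition Delaunay (X : {fset pt}) : set {fset pt} :=
  [set S | [/\ S != fset0, S `<=` X & exists y, forall x, x \in S -> Vor X x y]].

Definition dweight (X : {fset pt}) (S : {fset pt}) : R :=
  inf [set s : R | exists y, forall x, x \in S -> edist y x <= s /\ Vor X x y].

Definition facet_circumcenter (p : 'I_d.+1 -> pt) (i : 'I_d.+1) (c : pt) : Prop :=
  (exists a : 'I_d.+1 -> R,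
      [/\ a i = 0, \sum_j a j = 1 & c = \sum_j a j *: p j])
  /\ forall j k, j != i -> k != i -> edist c (p j) = edist c (p k).

End Delaunay.

(* Main.v *)
Require Import Defs.
From HB Require Import structures.
From mathcomp Require Import all_boot all_order all_algebra.
From mathcomp Require Import finmap.
From mathcomp Require Import boolp classical_sets reals.
From mathcomp Require Import ring lra.
Set Implicit Arguments. Unset Strict Implicit. Unset Printing Implicit Defensive.
Import Order.TTheory GRing.Theory Num.Theory.
Local Open Scope ring_scope.


Definition dot (R : realType) (d : nat) (x y : 'rV[R]_d) : R :=
  \sum_(k < d) x 0 k * y 0 k.
Definition n2 (R : realType) (d : nat) (x : 'rV[R]_d) : R := dot x x.

Lemma dotC (R : realType) d (x y : 'rV[R]_d) : dot x y = dot y x.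
Proof. by apply: eq_bigr => k _; rewrite mulrC. Qed.

Lemma dotDr (R : realType) d (x y z : 'rV[R]_d) : dot x (y + z) = dot x y + dot x z.
Proof. by rewrite /dot -big_split; apply: eq_bigr => k _; rewrite !mxE mulrDr. Qed.

Lemma dotNr (R : realType) d (x y : 'rV[R]_d) : dot x (- y) = - dot x y.
Proof. by rewrite /dot -sumrN; apply: eq_bigr => k _; rewrite !mxE mulrN. Qed.

Lemma dotBr (R : realType) d (x y z : 'rV[R]_d) : dot x (y - z) = dot x y - dot x z.
Proof. by rewrite dotDr dotNr. Qed.

Lemma dotZr (R : realType) d (x y : 'rV[R]_d) a : dot x (a *: y) = a * dot x y.
Proof. by rewrite /dot mulr_sumr; apply: eq_bigr => k _; rewrite !mxE mulrCA. Qed.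

Lemma dot0r (R : realType) d (x : 'rV[R]_d) : dot x 0 = 0.
Proof. by rewrite /dot big1 // => k _; rewrite mxE mulr0. Qed.

Lemma dot_sumr (R : realType) d (I : finType) (x : 'rV[R]_d) (f : I -> 'rV[R]_d) :
  dot x (\sum_i f i) = \sum_i dot x (f i).
Proof.
rewrite /dot exchange_big /=; apply: eq_bigr => k _.
by rewrite summxE mulr_sumr.
Qed.

Lemma dotDl (R : realType) d (x y z : 'rV[R]_d) : dot (y + z) x = dot y x + dot z x.
Proof. by rewrite dotC dotDr !(dotC x). Qed.
Lemma dotNl (R : realType) d (x y : 'rV[R]_d) : dot (- y) x = - dot y x.
Proof. by rewrite dotC dotNr dotC. Qed.
Lemma dotZl (R : realType) d (x y : 'rV[R]_d) a : dot (a *: y) x = a * dot y x.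
Proof. by rewrite dotC dotZr dotC. Qed.

Lemma n2B (R : realType) d (x y : 'rV[R]_d) : n2 (x - y) = n2 x - 2 * dot x y + n2 y.
Proof.
rewrite /n2 dotBr !dotDl !dotNl (dotC y x); ring.
Qed.

Lemma n2_ge0 (R : realType) d (x : 'rV[R]_d) : 0 <= n2 x.
Proof. by rewrite /n2 /dot sumr_ge0 // => k _; rewrite -expr2 sqr_ge0. Qed.

Lemma n2_eq0 (R : realType) d (x : 'rV[R]_d) : n2 x = 0 -> x = 0.
Proof.
move=> /eqP; rewrite /n2 /dot psumr_eq0 => [/allP H|k _]; last by rewrite -expr2 sqr_ge0.
apply/rowP => k; rewrite mxE.
have := H k (mem_index_enum _); rewrite -expr2 sqrf_eq0 => /eqP.
by rewrite (_ : 0 = ord0) // [0]ord1.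
Qed.

Lemma edistE (R : realType) d (x y : 'rV[R]_d) : edist x y = Num.sqrt (n2 (x - y)).
Proof. by rewrite /edist /n2 /dot; congr Num.sqrt; apply: eq_bigr => k _; rewrite !mxE expr2. Qed.

Lemma le_edist (R : realType) d (y a b : 'rV[R]_d) :
  (edist y a <= edist y b) = (n2 (y - a) <= n2 (y - b)).
Proof. by rewrite !edistE ler_sqrt // n2_ge0. Qed.

Lemma sum_neq_const (R : realType) n (i : 'I_n.+1) (c : R) :
  \sum_(j | j != i) c = c * n%:R.
Proof.
rewrite (eq_bigl (fun j => j \in predC1 i)) // sumr_const cardC1 card_ord mulr_natr //.
Qed.

Lemma dep (R : realType) d (p : 'I_d.+1 -> 'rV[R]_d) :
  exists v : 'I_d.+1 -> R, (exists i, v i != 0) /\ \sum_i v i *: p i = 0.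
Proof.
pose M : 'M[R]_(d.+1, d) := \matrix_(i, k) p i 0 k.
have : ~~ row_free M.
  by rewrite /row_free neq_ltn ltnS rank_leq_col.
rewrite -kermx_eq0 => /rowV0Pn [v /sub_kermxP vM vn0].
move/rV0Pn: vn0 => [i vi]; exists (fun i => v 0 i); split; first by exists i.
rewrite -[RHS]vM mulmx_sum_row; apply: eq_bigr => j _; congr (_ *: _).
by apply/rowP => k; rewrite !mxE.
Qed.

Lemma dot_row_sum (R : realType) d (p : 'I_d.+1 -> 'rV[R]_d) g (v : 'I_d.+1 -> R) k :
  (forall i, n2 (p i) = 1) -> (forall i j, i != j -> dot (p i) (p j) = g) ->
  dot (p k) (\sum_i v i *: p i) = v k + g * (\sum_i v i - v k).
Proof.
move=> H1 Hg; rewrite dot_sumr (bigD1 k) //= dotZr [dot _ _]H1 mulr1.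
rewrite [\sum_i v i](bigD1 k) //= addrAC subrr add0r mulr_sumr; congr (_ + _).
by apply: eq_bigr => j jk; rewrite dotZr Hg 1?eq_sym // mulrC.
Qed.

Lemma gram (R : realType) d (p : 'I_d.+1 -> 'rV[R]_d) g : (1 <= d)%N ->
  (forall i, n2 (p i) = 1) -> (forall i j, i != j -> dot (p i) (p j) = g) -> g != 1 ->
  g = -(d%:R)^-1 /\ \sum_i p i = 0.
Proof.
move=> d1 H1 Hg g1.
have [v [[i0 vi0] Hv]] := dep p.
have Hk k : v k * (1 - g) = - g * \sum_i v i.
  have := dot_row_sum v k H1 Hg; rewrite Hv dot0r => /eqP.
  rewrite eq_sym => /eqP E; apply/eqP; rewrite -subr_eq0 -[X in _ == X]E; apply/eqP; ring.
have g1' : 1 - g != 0 by rewrite subr_eq0 eq_sym.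
have Hc k : v k = v i0.
  by apply: (mulIf g1'); rewrite !Hk.
have Hs : \sum_i p i = 0.
  have : v i0 *: \sum_i p i = 0.
    by rewrite scaler_sumr -[RHS]Hv; apply: eq_bigr => k _; rewrite Hc.
  by move/eqP; rewrite scaler_eq0 (negbTE vi0) /= => /eqP.
split=> //.
have := congr1 (dot (p i0)) Hs; rewrite dot0r dot_sumr (bigD1 i0) //= [dot _ _]H1.
rewrite (eq_bigr (fun _ => g)); last by move=> j j0; rewrite Hg // eq_sym.
rewrite sum_neq_const => /eqP; rewrite addr_eq0 => /eqP E.
have dn0 : (d%:R : R) != 0 by rewrite pnatr_eq0 -lt0n.
rewrite -[g](mulfK dn0) (_ : g * d%:R = -1); first by rewrite mulN1r.
move: E; set t := g * d%:R; lra.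
Qed.

Lemma sqrt_inj' (R : realType) (a b : R) : 0 <= a -> 0 <= b -> Num.sqrt a = Num.sqrt b -> a = b.
Proof. by move=> a0 b0 E; rewrite -(sqr_sqrtr a0) -(sqr_sqrtr b0) E. Qed.

Lemma n2_edist0 (R : realType) d (x : 'rV[R]_d) r : 0 <= r -> edist x 0 = r -> n2 x = r ^+ 2.
Proof.
move=> r0; rewrite edistE subr0 => E.
by rewrite -E sqr_sqrtr // n2_ge0.
Qed.

Lemma sq_eq_pos (R : realType) (x r : R) : 0 <= x -> 0 <= r -> x ^+ 2 = r ^+ 2 -> x = r.
Proof. move=> x0 r0 E; nra. Qed.

Lemma facet (R : realType) d (p : 'I_d.+1 -> 'rV[R]_d) (i : 'I_d.+1) (c : 'rV[R]_d) :
  (1 <= d)%N -> (forall i, n2 (p i) = 1) ->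
  (forall i j, i != j -> dot (p i) (p j) = -(d%:R)^-1) -> \sum_i p i = 0 ->
  facet_circumcenter p i c -> c = - (d%:R)^-1 *: p i.
Proof.
move=> d1 H1 Hg Hs [[a [ai0 sa1 ->]] He].
set g := -(d%:R)^-1.
have dn0 : (d%:R : R) != 0 by rewrite pnatr_eq0 -lt0n.
have g1 : 1 - g != 0.
  rewrite /g opprK; apply: lt0r_neq0; rewrite ltr_wpDr ?invr_ge0 ?ler0n //.
have Hd j : dot (\sum_k a k *: p k) (p j) = a j * (1 - g) + g.
  by rewrite dotC (dot_row_sum a j H1 Hg) sa1 /g; ring.
have Ha j k : j != i -> k != i -> a j = a k.
  move=> ji ki; have := He j k ji ki; rewrite !edistE => /sqrt_inj'.
  rewrite !n2_ge0 => /(_ isT isT); rewrite !n2B !H1 !Hd => E.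
  by apply: (mulIf g1); move: E; set u := a j * (1 - g); set v := a k * (1 - g); lra.
have Haj j : j != i -> a j = (d%:R)^-1.
  move=> ji; have := sa1; rewrite (bigD1 i) //= ai0 add0r.
  rewrite (eq_bigr (fun _ => a j)); last by move=> k ki; rewrite (Ha k j).
  by rewrite sum_neq_const => E; apply: (mulIf dn0); rewrite E mulVf.
rewrite (bigD1 i) //= ai0 scale0r add0r.
rewrite (eq_bigr (fun k => (d%:R)^-1 *: p k)); last by move=> k ki; rewrite Haj.
rewrite -scaler_sumr scaleNr -scalerN; congr (_ *: _).
apply/eqP; rewrite -addr_eq0 addrC -[X in _ == X]Hs. rewrite [X in _ == X](bigD1 i) //=.
Qed.

Lemma n2_subZ (R : realType) d (y x : 'rV[R]_d) t :
  n2 (y - t *: x) = n2 y - 2 * t * dot y x + t ^+ 2 * n2 x.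
Proof. by rewrite n2B /n2 dotZr dotZl dotZr; ring. Qed.

Lemma n2Z (R : realType) d (x : 'rV[R]_d) t : n2 (t *: x) = t ^+ 2 * n2 x.
Proof. by rewrite /n2 dotZr dotZl; ring. Qed.

Lemma sum_dot0 (R : realType) d (p : 'I_d.+1 -> 'rV[R]_d) (y : 'rV[R]_d) :
  \sum_i p i = 0 -> \sum_j dot y (p j) = 0.
Proof. by move=> Hs; rewrite -dot_sumr Hs dot0r. Qed.

Lemma sum_le (R : realType) n (a : 'I_n.+1 -> R) i c :
  (forall j, j != i -> a j <= c) -> \sum_j a j <= a i + c * n%:R.
Proof.
move=> H; rewrite (bigD1 i) //= lerD2l -(sum_neq_const i).
by apply: ler_sum => j ji; apply: H.
Qed.

Lemma sum_ge (R : realType) n (a : 'I_n.+1 -> R) i c :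
  (forall j, j != i -> c <= a j) -> a i + c * n%:R <= \sum_j a j.
Proof.
move=> H; rewrite (bigD1 i) //= lerD2l -(sum_neq_const i).
by apply: ler_sum => j ji; apply: H.
Qed.

Lemma inf_eqP (R : realType) (A : set R) x : A x -> (forall s, A s -> x <= s) -> inf A = x.
Proof.
move=> Ax H; apply/eqP; rewrite eq_le; apply/andP; split.
  by apply: (ge_inf _ Ax); exists x.
by apply: lb_le_inf => //; exists x.
Qed.

Lemma inf_le_mem (R : realType) (A : set R) x l : A x -> (forall s, A s -> l <= s) -> inf A <= x.
Proof. by move=> Ax H; apply: (ge_inf _ Ax); exists l. Qed.

Lemma inf_ge_lb (R : realType) (A : set R) x l : A x -> (forall s, A s -> l <= s) -> l <= inf A.
Proof. by move=> Ax H; apply: lb_le_inf => //; exists x. Qed.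

Lemma sqrt_ge (R : realType) (x l : R) : 0 <= l -> l ^+ 2 <= x -> l <= Num.sqrt x.
Proof.
move=> l0 H; rewrite -[X in X <= _](ger0_norm l0) -(sqrtr_sqr l) ler_sqrt //.
by apply: le_trans H; rewrite sqr_ge0.
Qed.

Lemma sqrt_sq (R : realType) (l : R) : 0 <= l -> Num.sqrt (l ^+ 2) = l.
Proof. by move=> l0; rewrite sqrtr_sqr ger0_norm. Qed.

Lemma memQ0 (R : realType) d (p q : 'I_d.+1 -> 'rV[R]_d) x :
  (x \in (0 |` ([fset p i | i in 'I_d.+1] `|` [fset q i | i in 'I_d.+1]))%fset) <->
  x = 0 \/ (exists i, x = p i) \/ (exists i, x = q i).
Proof.
rewrite in_fset1U in_fsetU; split.
  case/orP => [/eqP->|/orP [/imfsetP [i _ ->]|/imfsetP [i _ ->]]]; [by left|by right; left; exists i|by right; right; exists i].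
case=> [->|[[i ->]|[i ->]]]; first by rewrite eqxx.
  by apply/orP; right; apply/orP; left; apply/imfsetP; exists i.
by apply/orP; right; apply/orP; right; apply/imfsetP; exists i.
Qed.

Lemma memQ (R : realType) d (p q : 'I_d.+1 -> 'rV[R]_d) x :
  (x \in ([fset p i | i in 'I_d.+1] `|` [fset q i | i in 'I_d.+1])%fset) <->
  (exists i, x = p i) \/ (exists i, x = q i).
Proof.
rewrite in_fsetU; split.
  case/orP => [/imfsetP [i _ ->]|/imfsetP [i _ ->]]; [by left; exists i|by right; exists i].
case=> [[i ->]|[i ->]].
  by apply/orP; left; apply/imfsetP; exists i.
by apply/orP; right; apply/imfsetP; exists i.
Qed.

Lemma VorQ0P (R : realType) d (p q : 'I_d.+1 -> 'rV[R]_d) y x :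
  Vor (0 |` ([fset p i | i in 'I_d.+1] `|` [fset q i | i in 'I_d.+1]))%fset x y <->
  [/\ n2 (y - x) <= n2 y, forall j, n2 (y - x) <= n2 (y - p j) &
      forall j, n2 (y - x) <= n2 (y - q j)].
Proof.
split.
  move=> H; split.
  - by have := H 0 (proj2 (memQ0 p q 0) (or_introl erefl)); rewrite le_edist subr0.
  - by move=> j; have := H (p j) (proj2 (memQ0 p q _) (or_intror (or_introl (ex_intro _ j erefl)))); rewrite le_edist.
  - by move=> j; have := H (q j) (proj2 (memQ0 p q _) (or_intror (or_intror (ex_intro _ j erefl)))); rewrite le_edist.
case=> H0 Hp Hq x' /memQ0 [->|[[j ->]|[j ->]]]; rewrite le_edist ?subr0 //.
Qed.

Lemma VorQP (R : realType) d (p q : 'I_d.+1 -> 'rV[R]_d) y x :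
  Vor ([fset p i | i in 'I_d.+1] `|` [fset q i | i in 'I_d.+1])%fset x y <->
  (forall j, n2 (y - x) <= n2 (y - p j)) /\
      (forall j, n2 (y - x) <= n2 (y - q j)).
Proof.
split.
  move=> H; split.
  - by move=> j; have := H (p j) (proj2 (memQ p q _) (or_introl (ex_intro _ j erefl))); rewrite le_edist.
  - by move=> j; have := H (q j) (proj2 (memQ p q _) (or_intror (ex_intro _ j erefl))); rewrite le_edist.
case=> Hp Hq x' /memQ [[j ->]|[j ->]]; rewrite le_edist //.
Qed.



Lemma Ep (R : realType) d (p : 'I_d.+1 -> 'rV[R]_d) y j :
  (forall i, n2 (p i) = 1) -> n2 (y - p j) = n2 y - 2 * dot y (p j) + 1.
Proof. by move=> H1; rewrite n2B H1. Qed.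

Lemma Eq (R : realType) d (p q : 'I_d.+1 -> 'rV[R]_d) rho y j :
  (forall i, n2 (p i) = 1) -> (forall i, q i = - rho *: p i) ->
  n2 (y - q j) = n2 y + 2 * rho * dot y (p j) + rho ^+ 2.
Proof. by move=> H1 Hq; rewrite Hq n2_subZ H1; ring. Qed.

Lemma no_q (R : realType) d (p q : 'I_d.+1 -> 'rV[R]_d) rho y i :
  (forall i, n2 (p i) = 1) -> \sum_i p i = 0 -> d%:R < rho ->
  (forall i, q i = - rho *: p i) ->
  Vor (0 |` ([fset p i | i in 'I_d.+1] `|` [fset q i | i in 'I_d.+1]))%fset 0 y ->
  Vor (0 |` ([fset p i | i in 'I_d.+1] `|` [fset q i | i in 'I_d.+1]))%fset (q i) y ->
  False.
Proof.
move=> H1 Hs Hr Hq /VorQ0P [_ Hp0 Hq0] /VorQ0P [Hqi _ _].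
have := Hq0 i; rewrite subr0 => Hqi'.
move: Hqi Hqi'; rewrite (Eq _ _ H1 Hq) => Hqi Hqi'.
have Ha j : dot y (p j) <= 1 / 2.
  by have := Hp0 j; rewrite subr0 (Ep _ _ H1); lra.
have := @sum_le _ _ (fun j => dot y (p j)) i (1/2) (fun j _ => Ha j).
rewrite sum_dot0 // => Hsum.
have d0 : 0 <= (d%:R : R) by rewrite ler0n.
set a := dot y (p i) in Hqi Hqi' Hsum; set N := n2 y in Hqi Hqi'; set D := (d%:R : R) in Hsum d0 Hr.
clear -Hqi Hqi' Hsum d0 Hr; nra.
Qed.

Lemma no_allp (R : realType) d (p q : 'I_d.+1 -> 'rV[R]_d) y :
  (forall i, n2 (p i) = 1) -> \sum_i p i = 0 ->
  (forall j, Vor (0 |` ([fset p i | i in 'I_d.+1] `|` [fset q i | i in 'I_d.+1]))%fset (p j) y) ->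
  False.
Proof.
move=> H1 Hs H.
have Ha j : 1 / 2 <= dot y (p j).
  by have [H0 _ _] := (proj1 (VorQ0P p q y (p j)) (H j)); move: H0; rewrite (Ep _ _ H1); lra.
have := @sum_ge _ _ (fun j => dot y (p j)) ord0 (1/2) (fun j _ => Ha j).
rewrite sum_dot0 // => Hsum.
have d0 : 0 <= (d%:R : R) by rewrite ler0n.
have := Ha ord0; move: Hsum d0; set a := dot y (p ord0); set D := (d%:R : R).
clear; nra.
Qed.

Lemma q_in_Q (R : realType) d (p q : 'I_d.+1 -> 'rV[R]_d) rho y i :
  (1 <= d)%N -> (forall i, n2 (p i) = 1) -> \sum_i p i = 0 -> d%:R < rho ->
  (forall i, q i = - rho *: p i) ->
  Vor ([fset p i | i in 'I_d.+1] `|` [fset q i | i in 'I_d.+1])%fset (q i) y ->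
  n2 (y - q i) <= n2 y.
Proof.
move=> d1 H1 Hs Hr Hq /VorQP [Hp _].
rewrite (Eq _ _ H1 Hq).
have Ha j : dot y (p j) <= (1 - rho ^+ 2 - 2 * rho * dot y (p i)) / 2.
  by have := Hp j; rewrite (Eq _ _ H1 Hq) (Ep _ _ H1); lra.
have := @sum_le _ _ (fun j => dot y (p j)) i _ (fun j _ => Ha j).
rewrite sum_dot0 // => Hsum.
have d0 : 1 <= (d%:R : R) by rewrite ler1n.
move: Hsum d0 Hr; set a := dot y (p i); set D := (d%:R : R); set N := n2 y.
clear => Hsum d0 Hr.
have r0 : 0 < rho by lra.
have Dr : 0 < D * rho - 1 by nra.
have : a <= - rho / 2.
  rewrite leNgt; apply/negP => H.
  have hp : 0 < (a + rho / 2) * (D * rho - 1) by apply: mulr_gt0; lra.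
  nra.
nra.
Qed.

Lemma dot_pp (R : realType) d (p : 'I_d.+1 -> 'rV[R]_d) i j :
  (forall i, n2 (p i) = 1) -> (forall i j, i != j -> dot (p i) (p j) = -(d%:R)^-1) ->
  dot (p i) (p j) = if j == i then 1 else -(d%:R)^-1.
Proof. by move=> H1 Hg; case: eqP => [->|/eqP ji]; [exact: H1|rewrite Hg // eq_sym]. Qed.

Lemma witness_facet (R : realType) d (p q : 'I_d.+1 -> 'rV[R]_d) rho i :
  (1 <= d)%N -> (forall i, n2 (p i) = 1) ->
  (forall i j, i != j -> dot (p i) (p j) = -(d%:R)^-1) -> d%:R < rho ->
  (forall i, q i = - rho *: p i) ->
  let y := (- (d%:R / 2)) *: p i in
  [/\ n2 y = (d%:R / 2) ^+ 2,
      forall j, j != i -> n2 (y - p j) = (d%:R / 2) ^+ 2,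
      forall j, (d%:R / 2) ^+ 2 <= n2 (y - p j) &
      forall j, (d%:R / 2) ^+ 2 <= n2 (y - q j)].
Proof.
move=> d1 H1 Hg Hr Hq y.
have dn0 : (d%:R : R) != 0 by rewrite pnatr_eq0 -lt0n.
have d0 : 1 <= (d%:R : R) by rewrite ler1n.
have Hy : n2 y = (d%:R / 2) ^+ 2 by rewrite /y n2Z H1; ring.
have Ha j : dot y (p j) = if j == i then - (d%:R / 2) else 1 / 2.
  rewrite /y dotZl (dot_pp _ _ H1 Hg); case: eqP => _; first by ring.
  by field.
split => //.
- move=> j ji; rewrite (Ep _ _ H1) Hy Ha (negbTE ji); lra.
- move=> j; rewrite (Ep _ _ H1) Hy Ha; case: eqP => _; set D := (d%:R : R) in d0 *; clear -d0; lra.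
- move=> j; rewrite (Eq _ _ H1 Hq) Hy Ha.
  have h : 0 <= rho * (rho - d%:R) by apply: mulr_ge0; lra.
  case: eqP => _; set D := (d%:R : R) in d0 Hr h *; clear -d0 Hr h; nra.
Qed.

Lemma witness_half (R : realType) d (p q : 'I_d.+1 -> 'rV[R]_d) rho i :
  (1 <= d)%N -> (forall i, n2 (p i) = 1) ->
  (forall i j, i != j -> dot (p i) (p j) = -(d%:R)^-1) -> d%:R < rho ->
  (forall i, q i = - rho *: p i) ->
  let y := (1 / 2) *: p i in
  [/\ n2 y = (1 / 2) ^+ 2, n2 (y - p i) = (1 / 2) ^+ 2,
      forall j, (1 / 2) ^+ 2 <= n2 (y - p j) &
      forall j, (1 / 2) ^+ 2 <= n2 (y - q j)].
Proof.
move=> d1 H1 Hg Hr Hq y.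
have dn0 : (d%:R : R) != 0 by rewrite pnatr_eq0 -lt0n.
have d0 : 1 <= (d%:R : R) by rewrite ler1n.
have e0 : 0 < (d%:R : R)^-1 by rewrite invr_gt0; lra.
have e1 : (d%:R : R)^-1 <= 1 by rewrite invf_le1; lra.
have Hy : n2 y = (1 / 2) ^+ 2 by rewrite /y n2Z H1; ring.
have Ha j : dot y (p j) = if j == i then 1 / 2 else - (d%:R)^-1 / 2.
  rewrite /y dotZl (dot_pp _ _ H1 Hg); case: eqP => _; ring.
split => //.
- by rewrite (Ep _ _ H1) Hy Ha eqxx; lra.
- move=> j; rewrite (Ep _ _ H1) Hy Ha; case: eqP => _; set e := (d%:R : R)^-1 in e0 e1 *; clear -e0 e1; lra.
- move=> j; rewrite (Eq _ _ H1 Hq) Hy Ha; case: eqP => _; set e := (d%:R : R)^-1 in e0 e1 *; set D := (d%:R : R) in d0 Hr *; clear -e0 e1 d0 Hr; nra.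
Qed.

Definition QQ (R : realType) d (p q : 'I_d.+1 -> 'rV[R]_d) : {fset 'rV[R]_d} :=
  ([fset p i | i in 'I_d.+1] `|` [fset q i | i in 'I_d.+1])%fset.
Definition QQ0 (R : realType) d (p q : 'I_d.+1 -> 'rV[R]_d) : {fset 'rV[R]_d} :=
  (0 |` ([fset p i | i in 'I_d.+1] `|` [fset q i | i in 'I_d.+1]))%fset.

Definition setup (R : realType) d (p q : 'I_d.+1 -> 'rV[R]_d) (rho : R) :=
  [/\ (2 <= d)%N, forall i, n2 (p i) = 1,
      forall i j, i != j -> dot (p i) (p j) = -(d%:R)^-1, \sum_i p i = 0 &
      [/\ d%:R < rho, forall i, q i = - rho *: p i & injective p]].

Lemma classify (R : realType) d (p q : 'I_d.+1 -> 'rV[R]_d) rho (S : {fset 'rV[R]_d}) y :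
  setup p q rho -> (0 \in S)%fset ->
  (S `<=` QQ0 p q)%fset -> (forall x, (x \in S)%fset -> Vor (QQ0 p q) x y) ->
  exists i, forall x, (x \in S)%fset -> x = 0 \/ exists j, j != i /\ x = p j.
Proof.
case=> Hd H1 Hg Hs [Hr Hq Hinj] S0 SQ HV.
have [i Hi] : exists i, ~ Vor (QQ0 p q) (p i) y.
  apply/existsNP => H; exact: (no_allp H1 Hs H).
exists i => x xS; have /memQ0 := fsubsetP SQ x xS.
case=> [Hx|[[j Hx]|[j Hx]]]; subst x; [by left| |].
  right; exists j; split => //; apply/negP => /eqP ji; apply: Hi; rewrite -ji; exact: (HV _ xS).
by exfalso; apply: (no_q H1 Hs Hr Hq (HV 0 S0) (HV _ xS)).
Qed.

Lemma zero_notin_Q (R : realType) d (p q : 'I_d.+1 -> 'rV[R]_d) rho :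
  setup p q rho -> (0 \notin QQ p q)%fset.
Proof.
case=> Hd H1 Hg Hs [Hr Hq Hinj]; apply/negP => /memQ [[i Hi]|[i Hi]].
  by have := H1 i; rewrite -Hi /n2 dot0r => /eqP; rewrite eq_sym oner_eq0.
have := congr1 (fun v => n2 v) Hi; rewrite Hq n2Z H1 {1}/n2 dot0r mulr1 => /eqP.
rewrite eq_sym sqrf_eq0 oppr_eq0 => /eqP r0.
have : (0 : R) <= d%:R by rewrite ler0n.
by rewrite r0 in Hr; lra.
Qed.

Lemma zero_in (R : realType) d (p q : 'I_d.+1 -> 'rV[R]_d) rho S :
  setup p q rho -> Delaunay (QQ0 p q) S -> ~ Delaunay (QQ p q) S -> (0 \in S)%fset.
Proof.
move=> HS [Sn0 SQ0 [y Hy]] HnD; apply/negPn/negP => S0; apply: HnD; split => //.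
  apply/fsubsetP => x xS; have := fsubsetP SQ0 x xS; rewrite /QQ0 in_fset1U.
  case/orP => // /eqP x0; by move: xS; rewrite x0 (negbTE S0).
exists y => x xS x' x'Q; apply: (Hy x xS); rewrite /QQ0; exact: fset1Ur.
Qed.

Lemma facet_good (R : realType) d (p q : 'I_d.+1 -> 'rV[R]_d) rho S i :
  setup p q rho -> (0 \in S)%fset ->
  (forall x, (x \in S)%fset -> x = 0 \/ exists j, j != i /\ x = p j) ->
  [/\ Delaunay (QQ0 p q) S, ~ Delaunay (QQ p q) S &
      exists y, forall x, (x \in S)%fset -> edist y x <= d%:R / 2 /\ Vor (QQ0 p q) x y].
Proof.
move=> HS S0 Hgood; have := HS; case=> Hd H1 Hg Hs [Hr Hq Hinj].
have d1 : (1 <= d)%N by apply: leq_trans Hd.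
have [Hy Hpj Hp Hqj] := witness_facet i d1 H1 Hg Hr Hq.
set y := (- (d%:R / 2)) *: p i in Hy Hpj Hp Hqj.
have dh0 : 0 <= (d%:R : R) / 2 by rewrite divr_ge0 ?ler0n.
have W : forall x, (x \in S)%fset -> edist y x <= d%:R / 2 /\ Vor (QQ0 p q) x y.
  move=> x /Hgood [->|[j [ji ->]]].
    split; first by rewrite edistE subr0 Hy sqrt_sq.
    by apply/VorQ0P; split; rewrite subr0 ?Hy // => k; rewrite -Hy.
  split; first by rewrite edistE Hpj // sqrt_sq.
  by apply/VorQ0P; split; rewrite Hpj ?Hy // => k; rewrite -Hy.
split; last by exists y.
- split; first by apply/eqP => E; rewrite E in S0.
    apply/fsubsetP => x /Hgood [->|[j [_ ->]]]; apply/memQ0; [by left|by right; left; exists j].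
  by exists y => x /W [].
- case=> _ SQ _; have := zero_notin_Q HS; by rewrite (fsubsetP SQ 0 S0).
Qed.

Lemma aj_half (R : realType) d (p q : 'I_d.+1 -> 'rV[R]_d) rho y j :
  setup p q rho -> Vor (QQ0 p q) 0 y -> Vor (QQ0 p q) (p j) y -> dot y (p j) = 1 / 2.
Proof.
case=> Hd H1 Hg Hs [Hr Hq Hinj] /VorQ0P [_ A _] /VorQ0P [B _ _].
have := A j; move: B; rewrite subr0 (Ep _ _ H1); lra.
Qed.

Lemma lb_half (R : realType) d (p q : 'I_d.+1 -> 'rV[R]_d) rho (S : {fset 'rV[R]_d}) j y s :
  setup p q rho -> (forall x, (x \in S)%fset -> edist y x <= s /\ Vor (QQ0 p q) x y) ->
  (0 \in S)%fset -> (p j \in S)%fset -> 1 / 2 <= s.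
Proof.
move=> HS H S0 pS.
have [e0 V0] := H 0 S0; have [_ Vj] := H _ pS.
have aj := aj_half HS V0 Vj.
have HS' := HS; case: HS' => Hd H1 Hg Hs [Hr Hq Hinj].
have := n2_ge0 (y - (1 / 2) *: p j); rewrite n2_subZ H1 aj => HN.
apply: le_trans e0; rewrite edistE subr0; apply: sqrt_ge; first lra.
move: HN; set N := n2 y; clear; lra.
Qed.

Lemma lb_facet (R : realType) d (p q : 'I_d.+1 -> 'rV[R]_d) rho (S : {fset 'rV[R]_d}) i y s :
  setup p q rho -> (forall x, (x \in S)%fset -> edist y x <= s /\ Vor (QQ0 p q) x y) ->
  (0 \in S)%fset -> (forall j, j != i -> (p j \in S)%fset) -> d%:R / 2 <= s.
Proof.
move=> HS H S0 pS.
have [e0 V0] := H 0 S0.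
have aj j : j != i -> dot y (p j) = 1 / 2.
  by move=> ji; have [_ Vj] := H _ (pS j ji); exact: (aj_half HS V0 Vj).
have HS' := HS; case: HS' => Hd H1 Hg Hs [Hr Hq Hinj].
have s1 := @sum_le _ _ (fun j => dot y (p j)) i (1/2) (fun j ji => ltac:(by rewrite /= (aj j ji))).
have s2 := @sum_ge _ _ (fun j => dot y (p j)) i (1/2) (fun j ji => ltac:(by rewrite /= (aj j ji))).
rewrite sum_dot0 // in s1 s2.
have := n2_ge0 (y - (- (d%:R / 2)) *: p i); rewrite n2_subZ H1 => HN.
have d0 : (0 : R) <= d%:R by rewrite ler0n.
apply: le_trans e0; rewrite edistE subr0; apply: sqrt_ge; first lra.
move: HN s1 s2 d0; set N := n2 y; set a := dot y (p i); set D := (d%:R : R); clear; nra.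
Qed.

Lemma card_p (T : choiceType) n (p : 'I_n -> T) : injective p -> #|` [fset p i | i in 'I_n]%fset| = n.
Proof. move=> Hi. rewrite card_imfset //=.
rewrite -(card_uniqP (enum_finmem_uniq (mem (@predT (ordinal n))))) -[RHS]card_ord; apply: eq_card => i.
by rewrite enum_finmemE.
Qed.

Lemma n2N (R : realType) d (x : 'rV[R]_d) : n2 (- x) = n2 x.
Proof. by rewrite /n2 dotNr dotNl opprK. Qed.

Lemma VorQ_zero (R : realType) d (p q : 'I_d.+1 -> 'rV[R]_d) rho i :
  setup p q rho -> Vor (QQ p q) (p i) 0 /\ edist 0 (p i) = 1.
Proof.
case=> Hd H1 Hg Hs [Hr Hq Hinj].
have d1 : (1 : R) <= d%:R by rewrite ler1n; apply: leq_trans Hd.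
have E : n2 (0 - p i) = 1 by rewrite sub0r n2N H1.
split; last by rewrite edistE E sqrtr1.
apply/VorQP; split => j; rewrite E.
  by rewrite sub0r n2N H1.
rewrite (Eq _ _ H1 Hq) /n2 dotC !dot0r; clear -d1 Hr; nra.
Qed.

Lemma lb_one (R : realType) d (p q : 'I_d.+1 -> 'rV[R]_d) rho y s :
  setup p q rho -> (forall j, edist y (p j) <= s) -> 1 <= s.
Proof.
case=> Hd H1 Hg Hs [Hr Hq Hinj] H.
have [j aj] : exists j, dot y (p j) <= 0.
  apply: contrapT => /forallNP H'.
  have Ha j : 0 <= dot y (p j) by have := H' j; rewrite leNgt => /negP; rewrite negbK => /ltW.
  have := @sum_ge _ _ (fun j => dot y (p j)) ord0 0 (fun j _ => Ha j).
  rewrite sum_dot0 // mul0r addr0 => a0.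
  by apply: (H' ord0); rewrite /=.
apply: le_trans (H j); rewrite edistE (Ep _ _ H1); apply: sqrt_ge => //.
have := n2_ge0 y; move: aj; set a := dot y (p j); set N := n2 y; clear; lra.
Qed.

Lemma QQ_sub (R : realType) d (p q : 'I_d.+1 -> 'rV[R]_d) : (QQ p q `<=` QQ0 p q)%fset.
Proof. by apply/fsubsetP => x xQ; rewrite /QQ0 fset1Ur. Qed.

Lemma part2_class (R : realType) d (p q : 'I_d.+1 -> 'rV[R]_d) rho T :
  setup p q rho -> Delaunay (QQ p q) T -> ~ Delaunay (QQ0 p q) T ->
  T = [fset p i | i in 'I_d.+1]%fset.
Proof.
move=> HS [Tn0 TQ [y Hy]] HnD; have := HS; case=> Hd H1 Hg Hs [Hr Hq Hinj].
have d1 : (1 <= d)%N by apply: leq_trans Hd.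
have TQ0 : (T `<=` QQ0 p q)%fset by apply: fsubset_trans (QQ_sub p q).
have noq i : (q i \notin T)%fset.
  apply/negP => qT; apply: HnD; split => //; exists y => x xT.
  have [Hpx Hqx] := proj1 (VorQP p q y x) (Hy x xT).
  apply/VorQ0P; split => //.
  apply: le_trans (Hqx i) _; exact: (q_in_Q d1 H1 Hs Hr Hq (Hy _ qT)).
have allp i : (p i \in T)%fset.
  apply/negPn/negP => piT; apply: HnD; split => //.
  have [Hy' Hpj Hp Hqj] := witness_facet i d1 H1 Hg Hr Hq.
  exists ((- (d%:R / 2)) *: p i) => x xT.
  have /memQ [[j Hx]|[j Hx]] := fsubsetP TQ x xT; subst x; last by have := noq j; rewrite xT.
  have ji : j != i by apply/negP => /eqP ji; by move: piT; rewrite -ji xT.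
  by apply/VorQ0P; split; rewrite Hpj ?Hy' // => k; rewrite -Hy'.
apply/fsetP => x; apply/idP/idP.
  move=> xT; have /memQ [[j Hx]|[j Hx]] := fsubsetP TQ x xT; subst x.
    by apply/imfsetP; exists j.
  by have := noq j; rewrite xT.
by move/imfsetP => [j _ ->].
Qed.

Local Open Scope fset_scope.

Theorem lemma3p19 (R : realType) (d : nat) (p q c : 'I_d.+1 -> 'rV[R]_d) (rho : R) :
  (2 <= d)%N ->
  (* p_1, ..., p_{d+1}: vertices of a regular d-simplex inscribed in the unit sphere *)
  (forall i, edist (p i) 0 = 1) ->
  (forall i j, i != j -> p i != p j) ->
  (forall i j k l, i != j -> k != l -> edist (p i) (p j) = edist (p k) (p l)) ->
  (* c i: circumcenter of the facet opposite p i *)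
  (forall i, facet_circumcenter p i (c i)) ->
  (* q i: on the ray from 0 through c i, at distance rho from 0 *)
  20 * d%:R < rho ->
  (forall i, (exists t : R, 0 <= t /\ q i = t *: c i) /\ edist (q i) 0 = rho) ->
  let Q := [fset p i | i in 'I_d.+1] `|` [fset q i | i in 'I_d.+1] in
  let Q0 := 0 |` Q in
  (* (1) Dring(Q) \ D(Q) *)
  ((exists L : seq {fset 'rV[R]_d}, (size L <= 2 ^ d.+1)%N /\
      forall S, (Delaunay Q0 S /\ ~ Delaunay Q S) <-> S \in L)
   /\ (forall S, Delaunay Q0 S -> ~ Delaunay Q S -> dweight Q0 S <= d%:R / 2)
   /\ (exists S, [/\ Delaunay Q0 S, ~ Delaunay Q S & dweight Q0 S = d%:R / 2])
   /\ (forall S, Delaunay Q0 S -> ~ Delaunay Q S -> S != [fset 0] ->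
         1 / 2 <= dweight Q0 S)
   /\ (exists S, [/\ Delaunay Q0 S, ~ Delaunay Q S, S != [fset 0]
                   & dweight Q0 S = 1 / 2]))
  /\
  (* (2) D(Q) \ Dring(Q) is a single d-simplex of weight 1 *)
  (exists S, [/\ forall T, (Delaunay Q T /\ ~ Delaunay Q0 T) <-> T = S,
                 #|` S| = d.+1 & dweight Q S = 1]).
Proof.
move=> Hd Hp1 Hinj Heq Hc Hr Hqd Q Q0.
have d1 : (1 <= d)%N by apply: leq_trans Hd.
have H1 : forall i, n2 (p i) = 1 by move=> i; rewrite (n2_edist0 ler01 (Hp1 i)) expr1n.
have o0m : (ord0 : 'I_d.+1) != ord_max by rewrite -(inj_eq val_inj) /= eq_sym -lt0n.
have Hg0 : forall i j, i != j -> dot (p i) (p j) = dot (p ord0) (p ord_max).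
  move=> i j ij; have := Heq i j ord0 ord_max ij o0m; rewrite !edistE => /sqrt_inj'.
  by rewrite !n2_ge0 => /(_ isT isT); rewrite !n2B !H1; lra.
have g1 : dot (p ord0) (p ord_max) != 1.
  apply/negP => /eqP g1; have := Hinj ord0 ord_max o0m; apply/negP; rewrite negbK.
  by apply/eqP/subr0_eq/n2_eq0; rewrite n2B !H1 g1; ring.
have [Hg' Hs] := gram d1 H1 Hg0 g1.
have Hg : forall i j, i != j -> dot (p i) (p j) = -(d%:R)^-1 by move=> i j ij; rewrite Hg0.
have D0 : (0 : R) <= d%:R by rewrite ler0n.
have Hr' : d%:R < rho by lra.
have Hq : forall i, q i = - rho *: p i.
  move=> i; have Hci := facet d1 H1 Hg Hs (Hc i).
  have [[t [t0 Hqt]] Hqr] := Hqd i.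
  have r0 : 0 <= rho by lra.
  have e0 : 0 < (d%:R : R)^-1 by rewrite invr_gt0 ltr0n.
  have E := n2_edist0 r0 Hqr; rewrite Hqt Hci scalerA n2Z H1 mulr1 in E.
  have te : t * (d%:R : R)^-1 = rho.
    apply: sq_eq_pos => //; first by rewrite mulr_ge0 // ltW.
    by rewrite -E mulrN sqrrN.
  by rewrite Hqt Hci scalerA mulrN te.
have HS : setup p q rho.
  split => //; split => // i j /eqP pij; apply: contraTeq pij; apply: Hinj.
change Q with (QQ p q); change Q0 with (QQ0 p q).
have hasd (S : {fset 'rV[R]_d}) : Delaunay (QQ0 p q) S -> ~ Delaunay (QQ p q) S ->
    (0 \in S) /\ exists i, forall x, x \in S -> x = 0 \/ exists j, j != i /\ x = p j.
  move=> HD HnD; have S0 := zero_in HS HD HnD; split => //.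
  case: HD => _ SQ0 [y Hy]; exact: (classify HS S0 SQ0 Hy).
have pn0 i : p i != 0.
  by apply/negP => /eqP pi0; have := H1 i; rewrite pi0 /n2 dot0r => /eqP; rewrite eq_sym oner_eq0.
have lb0 (S : {fset 'rV[R]_d}) : 0 \in S -> forall s,
    [set s : R | exists y, forall x, x \in S -> edist y x <= s /\ Vor (QQ0 p q) x y]%classic s -> 0 <= s.
  move=> S0 s [z Hz]; have [e _] := Hz 0 S0; apply: le_trans e; by rewrite edistE sqrtr_ge0.
split.
  split.
    pose L := (map (fun B : {set 'I_d.+1} => 0 |` [fset p j | j in B])
      (filter (fun B : {set 'I_d.+1} => B != [set: 'I_d.+1]%SET) (enum (powerset [set: 'I_d.+1]%SET)))).
    exists L.
    split.
      rewrite size_map size_filter (leq_trans (count_size _ _)) //.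
      by rewrite -cardE card_powerset cardsT card_ord.
    move=> S; split.
      case=> HD HnD; have [S0 [i Hi]] := hasd S HD HnD.
      apply/mapP; exists [set j | p j \in S].
        rewrite mem_filter mem_enum powersetE finset.subsetT andbT.
        apply/negP => /eqP BT; have : i \in [set j | p j \in S] by rewrite BT inE.
        rewrite inE => piS; case: (Hi _ piS) => [/eqP|[j [ji pji]]]; first by rewrite (negbTE (pn0 i)).
        by have := Hinj j i ji; rewrite pji eqxx.
      apply/fsetP => x; rewrite in_fset1U; apply/idP/idP.
        move=> xS; case: (Hi x xS) => [->|[j [_ Hx]]]; first by rewrite eqxx.
        by subst x; apply/orP; right; apply/imfsetP; exists j; rewrite ?inE.
      by case/orP => [/eqP -> //|/imfsetP [j]]; rewrite inE => jS ->.
    move/mapP => [B]; rewrite mem_filter => /andP [BT _] ->.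
    have [i iB] : exists i, i \notin B.
      apply: contrapT => /forallNP H; move/negP: BT; apply; apply/eqP/setP => j.
      by rewrite inE; apply/negPn/negP => jB; exact: (H j jB).
    have good : forall x, x \in (0 |` [fset p j | j in B]) -> x = 0 \/ exists j, j != i /\ x = p j.
      move=> x /fset1UP [->|/imfsetP [j jB ->]]; first by left.
      right; exists j; split => //; apply/negP => /eqP ji; by move: jB; rewrite ji (negbTE iB).
    by have [HD HnD _] := facet_good HS (fset1U1 _ _) good.
  split.
    move=> S HD HnD; have [S0 [i Hi]] := hasd S HD HnD.
    have [_ _ [y' Hy']] := facet_good HS S0 Hi.
    by apply: (inf_le_mem (l := 0)); [exists y'|exact: lb0].
  have H1' := H1.
  split.
    pose S := 0 |` [fset p j | j in [set j : 'I_d.+1 | j != ord0]%SET].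
    have S0 : 0 \in S by exact: fset1U1.
    have good : forall x, x \in S -> x = 0 \/ exists j, j != ord0 /\ x = p j.
      move=> x /fset1UP [->|/imfsetP [j]]; first by left.
      by rewrite inE => j0 ->; right; exists j.
    have pS : forall j, j != ord0 -> p j \in S.
      by move=> j j0; apply: fset1Ur; apply/imfsetP; exists j; rewrite ?inE.
    have [HD HnD [y Hy]] := facet_good HS S0 good.
    exists S; split => //; apply: inf_eqP; first by exists y.
    by move=> s [z Hz]; exact: (lb_facet HS Hz S0 pS).
  split.
    move=> S HD HnD Sn1; have [S0 [i Hi]] := hasd S HD HnD.
    have [x xS x0] : exists2 x, x \in S & x != 0.
      apply: contrapT => H; move/negP: Sn1; apply; apply/eqP/fsetP => x.
      rewrite in_fset1; apply/idP/idP => [xS|/eqP ->//].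
      by apply/negPn/negP => x0; apply: H; exists x.
    have [_ _ [y' Hy']] := facet_good HS S0 Hi.
    case: (Hi x xS) => [x0'|[j [_ xj]]]; first by rewrite x0' eqxx in x0.
    subst x.
    apply: (inf_ge_lb (x := d%:R / 2)); first by exists y'.
    by move=> s [z Hz]; exact: (lb_half HS Hz S0 xS).
  pose S := 0 |` [fset p ord0].
  have S0 : 0 \in S by exact: fset1U1.
  have pS : p ord0 \in S by rewrite fset1Ur ?fset11.
  have [Hy Hpi Hp Hqj] := witness_half ord0 d1 H1 Hg Hr' Hq.
  set y := (1 / 2) *: p ord0 in Hy Hpi Hp Hqj.
  have h0 : (0 : R) <= 1 / 2 by lra.
  have W : forall x, x \in S -> edist y x <= 1 / 2 /\ Vor (QQ0 p q) x y.
    move=> x /fset1UP [->|]; last rewrite in_fset1 => /eqP ->.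
      split; first by rewrite edistE subr0 Hy sqrt_sq.
      by apply/VorQ0P; split; rewrite subr0 ?Hy // => k; rewrite -Hy.
    split; first by rewrite edistE Hpi sqrt_sq.
    by apply/VorQ0P; split; rewrite Hpi ?Hy // => k; rewrite -Hy.
  exists S; split.
  - split; first by apply/eqP => E; rewrite E in S0.
      apply/fsubsetP => x /fset1UP [->|]; last rewrite in_fset1 => /eqP ->; apply/memQ0.
        by left.
      by right; left; exists ord0.
    by exists y => x /W [].
  - case=> _ SQ _; have := zero_notin_Q HS; by rewrite (fsubsetP SQ 0 S0).
  - apply/negP => /eqP E; move: pS; rewrite E in_fset1; exact/negP/pn0.
  - apply: inf_eqP; first by exists y.
    by move=> s [z Hz]; exact: (lb_half HS Hz S0 pS).
pose S := [fset p i | i in 'I_d.+1].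
have pS j : p j \in S by apply/imfsetP; exists j.
have [A B] : (forall x, x \in S -> edist 0 x <= 1 /\ Vor (QQ p q) x 0) /\ S `<=` QQ p q.
  split; first by move=> x /imfsetP [j _ ->]; have [V E] := VorQ_zero j HS; rewrite E.
  by apply/fsubsetP => x xS; rewrite /QQ in_fsetU xS.
exists S; split.
- move=> T; split; first by case=> HD HnD; exact: (part2_class HS HD HnD).
  move=> ->; split.
    split => //; last by exists 0 => x /A [].
    by apply/eqP => E; have := pS ord0; rewrite E.
  case=> _ _ [y Hy]; exact: (no_allp H1 Hs (fun j => Hy (p j) (pS j))).
- by apply: card_p => i j /eqP pij; apply: contraTeq pij; apply: Hinj.
- apply: inf_eqP; first by exists 0.
  by move=> s [z Hz]; apply: (lb_one (y := z) HS) => j; exact: (Hz _ (pS j)).1.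
Qed.
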